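(* The set $\{2,3\}$ is not a $\delta$-set.
   Context: All graphs are finite and simple; $d(u,v)$ denotes the usual graph distance (infinite between different components). For a set $J$ of nonnegative integers, a distance $J$-labeling of $G$ is a function $f:V(G)\to J$ with $f(V(G))=J$ such that whenever two distinct vertices $u,v$ satisfy $f(u)=f(v)=k$, we have $d(u,v)=k$. It is proper if every $k\in J\setminus\{0\}$ is the label of at least two vertices. A finite set $\Sigma$ of nonnegative integers is a $\delta$-set if there exists a graph admitting a proper distance $\Sigma$-labeling. *)

(* Defs.v *)
From mathcomp Require Import all_boot.
Set Implicit Arguments. Unset Strict Implicit. Unset Printing Implicit Defensive.

Definition simple_graph (T : finType) (e : rel T) : Prop :=
  symmetric e /\ irreflexive e.

Definition walk_len (T : finType) (e : rel T) (u v : T) (k : nat) : Prop :=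
  exists p : seq T, [/\ path e u p, last u p = v & size p = k].

(* d(u,v) = k (graph distance; infinite distance is never a nat). *)
Definition dist_is (T : finType) (e : rel T) (u v : T) (k : nat) : Prop :=
  walk_len e u v k /\ forall m, m < k -> ~ walk_len e u v m.

Definition distance_labeling (T : finType) (e : rel T) (J : seq nat)
  (f : T -> nat) : Prop :=
  (forall x, f x \in J) /\ (forall k, k \in J -> exists x, f x = k) /\
  (forall u v k, u != v -> f u = k -> f v = k -> dist_is e u v k).

Definition proper_distance_labeling (T : finType) (e : rel T) (J : seq nat)
  (f : T -> nat) : Prop :=
  distance_labeling e J f /\
  (forall k, k \in J -> k != 0 -> exists u v, [/\ u != v, f u = k & f v = k]).

Definition delta_set (J : seq nat) : Prop :=
  exists (T : finType) (e : rel T) (f : T -> nat),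
    simple_graph e /\ proper_distance_labeling e J f.

(* Main.v *)
Require Import Defs.
From mathcomp Require Import all_boot.

Set Implicit Arguments. Unset Strict Implicit.
Lemma edge_contra (T : finType) (e : rel T) (f : T -> nat) x y :
  simple_graph e -> distance_labeling e [:: 2; 3] f ->
  e x y -> f x = f y -> False.
Proof.
move=> [_ irr] [hin [_ hd]] exy fxy.
have xy : x != y.
  apply/eqP => E; subst y; by rewrite irr in exy.
have [_ hmin] := hd x y (f x) xy erefl (esym fxy).
apply: (hmin 1).
  by move: (hin x); rewrite !inE => /orP [] /eqP ->.
exists [:: y]; by rewrite /= exy.
Qed.

Theorem mainTheorem10 : ~ delta_set [:: 2; 3].
Proof.
move=> [T [e [f [sg [dl hp]]]]].
have [u [v [uv fu fv]]] := hp 3 isT isT.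
have [hin [hs hd]] := dl.
have [[p [pp lp sp]] _] := hd u v 3 uv fu fv.
case: p pp lp sp => [|a [|b [|c [|]]]] //= pp lp _.
move: pp; rewrite /= lp => /and4P [ua ab bv _].
have la : f a = 2.
  move: (hin a); rewrite !inE => /orP [] /eqP // fa.
  by exfalso; apply: (edge_contra sg dl ua); rewrite fu fa.
have lb : f b = 2.
  move: (hin b); rewrite !inE => /orP [] /eqP // fb.
  by exfalso; apply: (edge_contra sg dl bv); rewrite fv fb.
by apply: (edge_contra sg dl ab); rewrite la lb.
Qed.
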